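(* There exists $\overline x>0$ such that $\mu(x)-rU(x)>0$ for $x\in[0,\overline x)$ and $\mu(x)-rU(x)<0$ for $x\in(\overline x,\infty)$. Moreover $\overline x\ge u^*$ and $\mathcal LU(m)-rU(m)>0$ for all $m\in[u^*,\overline x)$.
   Context: Let $\mu,\sigma$ be real functions defined on an interval $\mathcal I=(\alpha,\infty)$ with $-\infty\le\alpha<0$, with $\sigma>0$, and let $r>0$. Assume: $\mu$ and $\sigma$ are $C^1$ with Lipschitz derivatives, $\mu(0)>rU(0)$ and $\sup_{x\ge0}\mu'(x)<r$. The function $U:[0,\infty)\to[0,\infty)$ is nondecreasing, concave and twice continuously differentiable on $[0,\infty)$, and there is $u^*\ge0$ with $U'(m)\ge1$ for $m\le u^*$, $U'(m)=1$ for $m\ge u^*$, and $\mathcal LU(m)-rU(m)>0$ for all $m\in[0,u^* )$, where $\mathcal Lh(x)=\mu(x)h'(x)+\tfrac12\sigma^2(x)h''(x)$. *)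

(* Defs.v *)
From Stdlib Require Import Reals.
From Coquelicot Require Export Coquelicot.
Open Scope R_scope.

Definition in_I (alpha : Rbar) (x : R) : Prop := Rbar_lt alpha x.

Definition nbhs_nonneg (x : R) := within (fun y : R => 0 <= y) (locally x).

Definition is_derive_nonneg (f : R -> R) (x l : R) : Prop :=
  filterdiff f (nbhs_nonneg x) (fun h => scal h l).

Definition C1_lipschitz_deriv_on_I (alpha : Rbar) (f df : R -> R) : Prop :=
  (forall x, in_I alpha x -> is_derive f x (df x)) /\
  exists L : R, forall x y, in_I alpha x -> in_I alpha y ->
    Rabs (df x - df y) <= L * Rabs (x - y).

(* U is twice continuously differentiable on [0,+oo), with U' = U1, U'' = U2
   (one-sided derivatives at 0). *)
Definition C2_nonneg (U U1 U2 : R -> R) : Prop :=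
  (forall x, 0 <= x -> is_derive_nonneg U x (U1 x)) /\
  (forall x, 0 <= x -> is_derive_nonneg U1 x (U2 x)) /\
  (forall x, 0 <= x -> filterlim U2 (nbhs_nonneg x) (locally (U2 x))).

(* Generator L h(x) = mu(x) h'(x) + 1/2 sigma(x)^2 h''(x). *)
Definition gen (mu sigma h1 h2 : R -> R) (x : R) : R :=
  mu x * h1 x + / 2 * (sigma x) ^ 2 * h2 x.

(* Main.v *)
Require Import Defs.
From Stdlib Require Import Reals Lra Classical.
From Coquelicot Require Import Coquelicot.
Open Scope R_scope.

Lemma nn_filter x : Filter (nbhs_nonneg x).
Proof. unfold nbhs_nonneg. apply within_filter. apply locally_filter. Qed.
#[local] Existing Instance nn_filter.

Lemma within_of_locally x (P : R -> Prop) : locally x P -> nbhs_nonneg x P.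
Proof. intro H. unfold nbhs_nonneg, within. apply filter_imp with (2 := H). auto. Qed.

Lemma nn_lim x : is_filter_lim (nbhs_nonneg x) x.
Proof. intros P HP. now apply within_of_locally. Qed.

Lemma nn_of_cont (f : R -> R) (x : R) : continuous f x -> filterlim f (nbhs_nonneg x) (locally (f x)).
Proof. intros H P HP. apply within_of_locally. exact (H P HP). Qed.

Lemma deriv_nn_cont (f : R -> R) (x l : R) : is_derive_nonneg f x l -> filterlim f (nbhs_nonneg x) (locally (f x)).
Proof.
  intro H. apply (filterdiff_continuous_aux (K := R_AbsRing) (U := R_NormedModule) (V := R_NormedModule) (F := nbhs_nonneg x)).
  all: try apply nn_filter.
  all: try (exists (fun h => scal h l); exact H).
  apply nn_lim.
Qed.

Lemma ball_R x d y : Rabs (y - x) < d -> ball x d y.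
Proof. intro H. exact H. Qed.

Lemma deriv_nn_const f x l : 0 <= x -> is_derive_nonneg f x l ->
  (forall y, x <= y -> f y = f x) -> l = 0.
Proof.
  intros Hx [_ Hd] Hc. specialize (Hd x (nn_lim x)).
  destruct (Req_dec l 0) as [E|E]; auto. exfalso.
  assert (Hl : 0 < Rabs l / 2) by (pose proof (Rabs_pos_lt _ E); lra).
  destruct (Hd (mkposreal _ Hl)) as [d Hdd].
  pose proof (cond_pos d) as dpos.
  assert (B : ball x d (x + d/2)).
  { apply ball_R. replace (x + d/2 - x) with (d/2) by ring. rewrite Rabs_pos_eq; lra. }
  specialize (Hdd _ B). simpl in Hdd.
  rewrite Hc in Hdd by lra.
  unfold norm, minus, plus, opp, scal in Hdd; simpl in Hdd.
  unfold abs, mult in Hdd; simpl in Hdd.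
  replace (f x + - f x + - ((x + d / 2 + - x) * l)) with (- ((d/2) * l)) in Hdd by ring.
  replace (x + d / 2 + - x) with (d/2) in Hdd by ring.
  rewrite Rabs_Ropp, Rabs_mult, (Rabs_pos_eq (d/2)) in Hdd by lra.
  assert (Hx0 : 0 <= x + d/2) by lra. specialize (Hdd Hx0).
  pose proof (Rabs_pos_lt _ E). nra.
Qed.

Lemma deriv_nn_pos f x l : 0 < x -> is_derive_nonneg f x l -> is_derive f x l.
Proof.
  intros Hx [Hlin Hd]. split; [exact Hlin|].
  intros y Hy. apply (is_filter_lim_locally_unique (K := R_AbsRing) (V := R_NormedModule)) in Hy. subst y.
  intro eps. specialize (Hd x (nn_lim x) eps).
  assert (Hp : locally x (fun y : R => 0 <= y)).
  { exists (mkposreal _ Hx). intros y By. simpl in By.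
    change (Rabs (y - x) < x) in By. apply Rabs_def2 in By. lra. }
  unfold nbhs_nonneg, within in Hd.
  generalize (filter_and _ _ Hp Hd). apply filter_imp. intros y [H1 H2]. auto.
Qed.

Lemma lim_plus {T} (F : (T -> Prop) -> Prop) {FF : Filter F} (f g : T -> R) (a b : R) :
  filterlim f F (locally a) -> filterlim g F (locally b) ->
  filterlim (fun x => f x + g x) F (locally (a + b)).
Proof. intros. apply (filterlim_comp_2 (G := locally a) (H := locally b) f g Rplus); auto. apply (filterlim_plus (K := R_AbsRing) (V := R_NormedModule) a b). Qed.

Lemma lim_mult {T} (F : (T -> Prop) -> Prop) {FF : Filter F} (f g : T -> R) (a b : R) :
  filterlim f F (locally a) -> filterlim g F (locally b) ->
  filterlim (fun x => f x * g x) F (locally (a * b)).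
Proof. intros. apply (filterlim_comp_2 (G := locally a) (H := locally b) f g Rmult); auto. apply (filterlim_mult (K := R_AbsRing) a b). Qed.

Lemma lim_const {T} (F : (T -> Prop) -> Prop) {FF : Filter F} (a : R) :
  filterlim (fun _ => a) F (locally a).
Proof. apply filterlim_const. Qed.

Lemma lim_plusN m (f g : R -> R) (a b : R) :
  filterlim f (nbhs_nonneg m) (locally a) -> filterlim g (nbhs_nonneg m) (locally b) ->
  filterlim (fun x => f x + g x) (nbhs_nonneg m) (locally (a + b)).
Proof. exact (@lim_plus R (nbhs_nonneg m) (nn_filter m) f g a b). Qed.
Lemma lim_multN m (f g : R -> R) (a b : R) :
  filterlim f (nbhs_nonneg m) (locally a) -> filterlim g (nbhs_nonneg m) (locally b) ->
  filterlim (fun x => f x * g x) (nbhs_nonneg m) (locally (a * b)).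
Proof. exact (@lim_mult R (nbhs_nonneg m) (nn_filter m) f g a b). Qed.
Lemma lim_constN m (a : R) : filterlim (fun _ => a) (nbhs_nonneg m) (locally a).
Proof. exact (@lim_const R (nbhs_nonneg m) (nn_filter m) a). Qed.

Lemma lim_neg (f : R -> R) (m L : R) : filterlim f (nbhs_nonneg m) (locally L) -> L < 0 -> 0 < m ->
  exists y, 0 <= y < m /\ f y < 0.
Proof.
  intros H HL Hm.
  assert (HP : locally L (fun z => z < 0)).
  { assert (e : 0 < - L / 2) by lra. exists (mkposreal _ e). intros z Bz.
    change (Rabs (z - L) < - L / 2) in Bz. apply Rabs_def2 in Bz. simpl in Bz. lra. }
  specialize (H _ HP). destruct H as [d Hd].
  pose proof (cond_pos d).
  pose (y := m - Rmin d m / 2).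
  assert (0 < Rmin d m) by (apply Rmin_pos; lra).
  assert (Rmin d m <= d) by apply Rmin_l. assert (Rmin d m <= m) by apply Rmin_r.
  exists y. split. unfold y; lra.
  apply Hd. apply ball_R. unfold y. replace (m - Rmin d m / 2 - m) with (- (Rmin d m / 2)) by ring.
  rewrite Rabs_Ropp, Rabs_pos_eq; lra. unfold y; lra.
Qed.

Lemma lim_pos (f : R -> R) (m L : R) : filterlim f (nbhs_nonneg m) (locally L) -> 0 < L -> 0 <= m ->
  exists y, m < y /\ 0 < f y.
Proof.
  intros H HL Hm0.
  assert (HP : locally L (fun z => 0 < z)).
  { assert (e : 0 < L / 2) by lra. exists (mkposreal _ e). intros z Bz.
    change (Rabs (z - L) < L / 2) in Bz. apply Rabs_def2 in Bz. simpl in Bz. lra. }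
  specialize (H _ HP). destruct H as [d Hd].
  pose proof (cond_pos d).
  exists (m + d/2). split. lra.
  apply Hd. apply ball_R. replace (m + d/2 - m) with (d/2) by ring.
  rewrite Rabs_pos_eq; lra.
  lra.
Qed.

Theorem lemma2
  (alpha : Rbar) (mu sigma dmu dsigma U U1 U2 : R -> R) (r ustar : R)
  (Halpha : Rbar_lt alpha 0)
  (Hsigma_pos : forall x, in_I alpha x -> 0 < sigma x)
  (Hr : 0 < r)
  (Hmu : C1_lipschitz_deriv_on_I alpha mu dmu)
  (Hsig : C1_lipschitz_deriv_on_I alpha sigma dsigma)
  (Hmu0 : mu 0 > r * U 0)
  (Hsup : exists c, c < r /\ forall x, 0 <= x -> dmu x <= c)
  (HU_nonneg : forall x, 0 <= x -> 0 <= U x)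
  (HU_mono : forall x y, 0 <= x -> x <= y -> U x <= U y)
  (HU_concave : forall x y t, 0 <= x -> 0 <= y -> 0 <= t <= 1 ->
      t * U x + (1 - t) * U y <= U (t * x + (1 - t) * y))
  (HU_C2 : C2_nonneg U U1 U2)
  (Hustar : 0 <= ustar)
  (HU1_le : forall m, 0 <= m <= ustar -> 1 <= U1 m)
  (HU1_ge : forall m, ustar <= m -> U1 m = 1)
  (HLU : forall m, 0 <= m < ustar -> gen mu sigma U1 U2 m - r * U m > 0) :
  exists xbar, 0 < xbar /\
    (forall x, 0 <= x < xbar -> mu x - r * U x > 0) /\
    (forall x, xbar < x -> mu x - r * U x < 0) /\
    ustar <= xbar /\
    (forall m, ustar <= m < xbar -> gen mu sigma U1 U2 m - r * U m > 0).
Proof.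
  destruct Hsup as [c0 [Hc0 Hdmu]].
  set (k := r - c0). assert (Hk : 0 < k) by (unfold k; lra).
  set (f := fun x => mu x - r * U x).
  set (g := fun x => gen mu sigma U1 U2 x - r * U x).
  destruct HU_C2 as [HdU [HdU1 HcU2]].
  assert (HinI : forall x, 0 <= x -> in_I alpha x).
  { intros x Hx. unfold in_I. destruct alpha; simpl in *; lra. }
  assert (HU1ge1 : forall m, 0 <= m -> 1 <= U1 m).
  { intros m Hm. destruct (Rle_dec m ustar).
    - apply HU1_le; lra.
    - rewrite HU1_ge by lra. lra. }
  assert (Hslope : forall a b, 0 < a -> a < b -> f b - f a <= - k * (b - a)).
  { intros a b Ha Hab.
    destruct (MVT_cor2 f (fun t => dmu t - r * U1 t) a b Hab) as [c [Hc1 Hc2]].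
    { intros c Hc. apply derivable_pt_lim_minus.
      - apply is_derive_Reals. apply (proj1 Hmu). apply HinI. lra.
      - apply derivable_pt_lim_scal. apply is_derive_Reals.
        apply deriv_nn_pos. lra. apply HdU. lra. }
    rewrite Hc1. unfold k.
    pose proof (Hdmu c ltac:(lra)). pose proof (HU1ge1 c ltac:(lra)).
    assert (dmu c - r * U1 c <= c0 - r) by nra.
    assert (0 < b - a) by lra. nra. }
  assert (Hmuc : forall m, 0 <= m -> filterlim mu (nbhs_nonneg m) (locally (mu m))).
  { intros m Hm. apply nn_of_cont. apply (ex_derive_continuous (K := R_AbsRing) (V := R_NormedModule)).
    exists (dmu m). apply (proj1 Hmu). now apply HinI. }
  assert (Hsigc : forall m, 0 <= m -> filterlim sigma (nbhs_nonneg m) (locally (sigma m))).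
  { intros m Hm. apply nn_of_cont. apply (ex_derive_continuous (K := R_AbsRing) (V := R_NormedModule)).
    exists (dsigma m). apply (proj1 Hsig). now apply HinI. }
  assert (Hfc : filterlim f (nbhs_nonneg 0) (locally (f 0))).
  { assert (H : filterlim (fun y => mu y + (- r) * U y) (nbhs_nonneg 0)
                   (locally (mu 0 + (- r) * U 0))).
    { apply lim_plusN. apply Hmuc; lra. apply lim_multN. apply lim_constN.
      apply (deriv_nn_cont U 0 (U1 0)). apply HdU; lra. }
    unfold f. replace (mu 0 - r * U 0) with (mu 0 + - r * U 0) by ring.
    eapply filterlim_ext; [|exact H]. intro y. simpl. ring. }
  assert (Hgc : forall m, 0 <= m -> filterlim g (nbhs_nonneg m) (locally (g m))).
  { intros m Hm.
    assert (H : filterlim (fun y => mu y * U1 y + (/2 * (sigma y * sigma y)) * U2 y + (- r) * U y)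
                 (nbhs_nonneg m)
                 (locally (mu m * U1 m + (/2 * (sigma m * sigma m)) * U2 m + (- r) * U m))).
    { apply lim_plusN; [apply lim_plusN|].
      - apply lim_multN. now apply Hmuc. apply (deriv_nn_cont U1 m (U2 m)). now apply HdU1.
      - apply lim_multN; [apply lim_multN|].
        + apply lim_constN.
        + apply lim_multN; now apply Hsigc.
        + now apply HcU2.
      - apply lim_multN. apply lim_constN. apply (deriv_nn_cont U m (U1 m)). now apply HdU. }
    unfold g, gen.
    replace (mu m * U1 m + / 2 * sigma m ^ 2 * U2 m - r * U m) with
      (mu m * U1 m + (/2 * (sigma m * sigma m)) * U2 m + (- r) * U m) by ring.
    eapply filterlim_ext; [|exact H]. intro y. simpl. ring. }
  assert (HU2z : forall m, ustar <= m -> U2 m = 0).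
  { intros m Hm. apply (deriv_nn_const U1 m). lra. apply HdU1. lra.
    intros y Hy. rewrite !HU1_ge by lra. reflexivity. }
  set (S := fun x => 0 <= x /\ f x > 0).
  assert (Hf0 : f 0 > 0) by (unfold f; lra).
  destruct (completeness S) as [xbar [Hub Hlub]].
  { exists (1 + Rabs (f 1) / k). intros x [Hx Hfx].
    destruct (Rle_dec x 1). pose proof (Rabs_pos (f 1)).
    assert (0 <= Rabs (f 1) / k) by (apply Rdiv_le_0_compat; lra). lra.
    pose proof (Hslope 1 x ltac:(lra) ltac:(lra)).
    pose proof (Rle_abs (f 1)).
    assert (x - 1 <= Rabs (f 1) / k).
    { unfold Rdiv. apply Rmult_le_reg_r with k; auto.
      rewrite Rmult_assoc, Rinv_l, Rmult_1_r by lra. nra. }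
    lra. }
  { exists 0. split; [lra|exact Hf0]. }
  assert (Hx0 : 0 <= xbar) by (apply Hub; split; [lra|exact Hf0]).
  assert (P1 : forall x, 0 <= x < xbar -> f x > 0).
  { intros x Hx. destruct (Req_dec x 0) as [->|Hne]; auto.
    destruct (classic (exists x', S x' /\ x < x')) as [[x' [[Hx'0 Hx'] Hxx']]|Hno].
    - pose proof (Hslope x x' ltac:(lra) Hxx'). nra.
    - exfalso. assert (xbar <= x); [|lra]. apply Hlub. intros y Sy.
      destruct (Rle_dec y x); auto. exfalso. apply Hno. exists y. split; auto; lra. }
  assert (P2 : forall x, xbar < x -> f x < 0).
  { intros x Hx. set (md := (x + xbar) / 2).
    assert (f md <= 0).
    { destruct (Rle_dec (f md) 0); auto. exfalso.
      assert (md <= xbar) by (apply Hub; split; [unfold md; lra | lra]). unfold md in *; lra. }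
    pose proof (Hslope md x ltac:(unfold md; lra) ltac:(unfold md; lra)). unfold md in *. nra. }
  assert (Hpos : 0 < xbar).
  { destruct (lim_pos f 0 (f 0) Hfc Hf0 ltac:(lra)) as [y [Hy Hfy]].
    assert (y <= xbar) by (apply Hub; split; lra). lra. }
  assert (Hus : ustar <= xbar).
  { destruct (Rle_or_lt ustar xbar) as [H|H]; auto. exfalso.
    assert (Hgu : g ustar < 0).
    { unfold g, gen. rewrite HU1_ge, HU2z by lra. pose proof (P2 ustar H).
      unfold f in *. lra. }
    destruct (lim_neg g ustar (g ustar) (Hgc ustar Hustar) Hgu ltac:(lra)) as [y [Hy Hgy]].
    pose proof (HLU y Hy). unfold g in Hgy. lra. }
  exists xbar. split; [exact Hpos|]. split; [exact P1|]. split; [exact P2|].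
  split; [exact Hus|].
  intros m Hm. unfold gen. rewrite HU1_ge, HU2z by lra.
  pose proof (P1 m ltac:(lra)). unfold f in *. lra.
Qed.
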